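(* Let $\mathcal{F}$ be a hypothesis class of functions $\mathcal{X}\to\{\pm1\}$, $\mathcal{P}$ a distribution on $\mathcal{X}\times\{\pm1\}$, and $G\subseteq\mathcal{F}$. If a true risk minimizer $f^*$ of $\mathcal{P}$ (i.e. a minimizer of $R_{\mathcal{P}}$ over $\mathcal{F}$) belongs to $G$, then $f^*$ is also a true risk minimizer under the distribution $\mathcal{P}(G)$, i.e. $f^*$ minimizes $R_{\mathcal{P}(G)}$ over $\mathcal{F}$.
   Context: $AGR(G)=\{x\in\mathcal{X}:f_1(x)=f_2(x)\ \forall f_1,f_2\in G\}$. $\mathcal{P}(G)$ is the distribution of $(X,Y')$ where $(X,Y)\sim\mathcal{P}$ and $Y'$ is the common value of the functions of $G$ at $X$ if $X\in AGR(G)$, and $Y'=Y$ otherwise. $R_{\mathcal{P}}(f)=\Pr_{\mathcal{P}}[f(X)\ne Y]$, $R_{\mathcal{P}(G)}(f)=\Pr_{\mathcal{P}(G)}[f(X)\ne Y']$. (In the paper $G$ is a low-error set $G_t$ produced by the Active-ILESS algorithm, which relabels examples in $AGR(G_t)$ by the unanimous value.) *)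

(* Defs.v *)
From HB Require Import structures.
From mathcomp Require Import all_boot all_order all_algebra.
From mathcomp Require Import all_classical all_reals all_analysis.
Set Implicit Arguments. Unset Strict Implicit. Unset Printing Implicit Defensive.
Import Order.TTheory GRing.Theory Num.Theory.
Local Open Scope classical_set_scope.
Local Open Scope ring_scope.

(* Labels {-1,+1} are represented by bool (true = +1, false = -1). *)

Definition AGR (X : Type) (G : set (X -> bool)) : set X :=
  [set x | forall f1 f2, G f1 -> G f2 -> f1 x = f2 x].

Definition relabel (X : Type) (G : set (X -> bool)) (z : X * bool) : X * bool :=
  if `[< AGR G z.1 /\ exists f, G f >]
  then (z.1, xget true [set b | exists2 f, G f & f z.1 = b])
  else z.

(* The distribution P(G) = law of (X, Y') = pushforward of P along relabel. *)
Definition relabel_dist d (X : measurableType d) (R : realType)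
  (P : probability (X * bool)%type R) (G : set (X -> bool))
  (A : set (X * bool)) : \bar R :=
  P (relabel G @^-1` A).

Definition risk (X : Type) (R : realType) (Q : set (X * bool) -> \bar R)
  (f : X -> bool) : \bar R :=
  Q [set z | f z.1 != z.2].

Definition risk_minimizer (X : Type) (R : realType)
  (Q : set (X * bool) -> \bar R) (F : set (X -> bool)) (f : X -> bool) :=
  F f /\ forall g, F g -> (risk Q f <= risk Q g)%E.

(* Main.v *)
Require Import Defs.
From HB Require Import structures.
From mathcomp Require Import all_boot all_order all_algebra.
From mathcomp Require Import all_classical all_reals all_analysis.
Local Open Scope classical_set_scope.
Local Open Scope ring_scope.
Import Order.TTheory GRing.Theory Num.Theory.

Lemma helper (R : realType) (a b c e : \bar R) :
  (b <= c + e)%E -> (a + b <= e + a + c)%E.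
Proof.
move=> h; rewrite -addeA; apply: le_trans (leeD2l a h) _.
by rewrite addeCA [(e + c)%E]addeC.
Qed.

Theorem lemma10 (d : measure_display) (X : measurableType d) (R : realType)
  (F : set (X -> bool)) (P : probability (X * bool)%type R)
  (G : set (X -> bool)) (fstar : X -> bool) :
  (forall f, F f -> measurable_fun setT f) ->
  measurable (AGR G) ->
  G `<=` F ->
  risk_minimizer (fun A => P A) F fstar ->
  G fstar ->
  risk_minimizer (relabel_dist P G) F fstar.
Proof.
move=> mF mA GF [Ffs fsmin] Gfs; split => // g Fg.
have mpre f : F f -> forall B : set bool, measurable (f @^-1` B).
  move=> Ff B; rewrite -[_ @^-1` _]setTI; exact: mF.
pose S (f : X -> bool) := [set z : X * bool | f z.1 != z.2].
pose A2 := AGR G `*` [set: bool].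
pose D (f : X -> bool) := [set x | f x != fstar x] `*` [set: bool].
have mS f : F f -> measurable (S f).
  move=> Ff.
  have -> : S f = (f @^-1` [set true]) `*` [set false] `|`
                  (f @^-1` [set false]) `*` [set true].
    apply/seteqP; split=> -[x y] /=; rewrite /S /=;
      case: (f x); case: y => //=; by [left|right|case=> -[]].
  apply: measurableU; apply: measurableX => //; exact: mpre.
have mA2 : measurable A2 by apply: measurableX.
have mD f : F f -> measurable (D f).
  move=> Ff; apply: measurableX => //.
  have -> : [set x | f x != fstar x] =
     (f @^-1` [set true] `&` fstar @^-1` [set false]) `|`
     (f @^-1` [set false] `&` fstar @^-1` [set true]).
    apply/seteqP; split=> x /=; case: (f x); case: (fstar x) => //=;
      by [left|right|case=> -[]].
  by apply: measurableU; apply: measurableI; apply: mpre.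
have pre f : relabel G @^-1` S f = (A2 `&` D f) `|` (~` A2 `&` S f).
  apply/seteqP; split=> -[x y]; rewrite /relabel /=;
    case: asboolP => [[hA hne]|hn].
  - have -> : xget true [set b | exists2 f0, G f0 & f0 x = b] = fstar x.
      apply: xget_unique; first by exists fstar.
      by move=> b [f0 Gf0 <-]; apply: hA.
    by rewrite /S /= => h; left; split => //; split.
  - have nA : ~ AGR G x by move=> hA; apply: hn; split => //; exists fstar.
    by move=> h; right; split => // -[].
  - have -> : xget true [set b | exists2 f0, G f0 & f0 x = b] = fstar x.
      apply: xget_unique; first by exists fstar.
      by move=> b [f0 Gf0 <-]; apply: hA.
    case=> -[hA2 hD]; first by case: hD.
    by exfalso; apply: hA2; split.
  - by case=> -[] // [] hA _; exfalso; apply: hn; split => //; exists fstar.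
have rd f : F f -> risk (relabel_dist P G) f = (P (A2 `&` D f) + P (~` A2 `&` S f))%E.
  move=> Ff; rewrite /risk /relabel_dist.
  rewrite (_ : [set z | f z.1 != z.2] = S f) // pre measureU //.
  all: try (by apply: measurableI => //; apply: mD).
    by apply: measurableI; [apply: measurableC | apply: mS].
  by apply/seteqP; split => -[x y] // [[hA _] [hnA _]].
rewrite !rd //.
have -> : A2 `&` D fstar = set0.
  by apply/seteqP; split=> -[x y] // [_ [/= /eqP]].
rewrite measure0 add0e.
have fin U : measurable U -> P U \is a fin_num by move=> mU; apply: fin_num_measure.
have mSf := mS _ Ffs; have mSg := mS _ Fg.
have h1 := measureDI P mSf mA2.
have h2 := measureDI P mSg mA2.
have h3 : (P (S g `&` A2) <= P (S fstar `&` A2) + P (A2 `&` D g))%E.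
  apply: le_trans (measureU2 _ _ _); last 2 first.
  - exact: measurableI.
  - by apply: measurableI => //; apply: mD.
  apply: le_measure; rewrite ?inE.
  - exact: measurableI.
  - by apply: measurableU; apply: measurableI => //; apply: mD.
  move=> -[x y] [/= h hA]; case: (boolP (g x == fstar x)) => [/eqP e|ne].
    by left; split => //; rewrite /S /= -e.
  by right; split => //; split.
have h4 := fsmin g Fg; rewrite /risk in h4.
rewrite (_ : [set z | fstar z.1 != z.2] = S fstar) // in h4.
rewrite (_ : [set z | g z.1 != z.2] = S g) // in h4.
rewrite -(@leeD2rE _ (P (S fstar `&` A2))); last by apply: fin; apply: measurableI.
have e1 : ~` A2 `&` S fstar = S fstar `\` A2 by rewrite setDE setIC.
have e2 : ~` A2 `&` S g = S g `\` A2 by rewrite setDE setIC.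
rewrite e1 e2 -h1.
apply: le_trans h4 _; rewrite h2.
exact: helper h3.
Qed.
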